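(* Let $G=(V,E)$ with weight $\mu$ be an infinite, connected, locally finite weighted graph satisfying condition $(p_0)$. Let $m\ge 3$ and $(p,q)\in G_{5.2}=\{(p,q): p+q=m-1,\ q<0\}$. Then the inequality $\Delta_m u+u^p|\nabla u|^q\le 0$ on $V$ admits no nontrivial positive solution (no volume growth assumption is imposed).
   Context: Setting: $G=(V,E)$ is an infinite, connected, locally finite graph with no loops and no multiple edges; $x\sim y$ means $x$ and $y$ are joined by an edge. A weight is a symmetric function $\mu:V\times V\to[0,\infty)$ with $\mu_{xy}=\mu_{yx}>0$ if and only if $x\sim y$; the vertex measure is $\mu(x)=\sum_{y\sim x}\mu_{xy}$. For $m>1$ and $u:V\to\mathbb R$, $\Delta_m u(x)=\frac{1}{\mu(x)}\sum_{y\sim x}\mu_{xy}|u(y)-u(x)|^{m-2}(u(y)-u(x))$ and $|\nabla u(x)|=\big(\sum_{y\sim x}\frac{\mu_{xy}}{2\mu(x)}(u(y)-u(x))^2\big)^{1/2}$. Condition $(p_0)$: there is a constant $p_0>1$ such that $\mu_{xy}/\mu(x)\ge 1/p_0$ for all $x\sim y$. A nontrivial positive solution of $\Delta_m u+u^p|\nabla u|^q\le 0$ is a non-constant function $u:V\to(0,\infty)$ such that $\Delta_m u(x)+u(x)^p|\nabla u(x)|^q\le 0$ for every $x\in V$, with the conventions $0^0=1$, $0^q=0$ for $q>0$, and, for $q<0$, $|\nabla u(x)|^q=+\infty$ when $|\nabla u(x)|=0$ (so the inequality fails at such $x$). *)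

(* Defs.v *)
From Stdlib Require Import Reals Lra List Relations.
Open Scope R_scope.

(* A weighted graph on vertex type V: adjacency relation [adj], finite
   neighbour lists [nb] (local finiteness), and edge weights [mu]. *)
Definition weighted_graph (V : Type) (adj : V -> V -> Prop)
    (nb : V -> list V) (mu : V -> V -> R) : Prop :=
  (forall x y, adj x y -> adj y x) /\
  (forall x, ~ adj x x) /\
  (forall x, NoDup (nb x)) /\
  (forall x y, In y (nb x) <-> adj x y) /\
  (forall x y, mu x y = mu y x) /\
  (forall x y, 0 <= mu x y) /\
  (forall x y, 0 < mu x y <-> adj x y).

Definition infinite_type (V : Type) : Prop :=
  forall l : list V, exists x, ~ In x l.

Definition connected (V : Type) (adj : V -> V -> Prop) : Prop :=
  forall x y, clos_refl_trans V adj x y.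

Definition sum_nb {V : Type} (nb : V -> list V) (x : V) (f : V -> R) : R :=
  fold_right (fun y acc => f y + acc) 0 (nb x).

Definition vmeas {V : Type} (nb : V -> list V) (mu : V -> V -> R) (x : V) : R :=
  sum_nb nb x (fun y => mu x y).

Definition cond_p0 {V : Type} (adj : V -> V -> Prop) (nb : V -> list V)
    (mu : V -> V -> R) : Prop :=
  exists p0 : R, 1 < p0 /\
    forall x y, adj x y -> mu x y / vmeas nb mu x >= 1 / p0.

(* t^a for t >= 0 and a > 0, with 0^a = 0 *)
Definition powp (a t : R) : R := if Rle_dec t 0 then 0 else Rpower t a.

Definition Delta_m {V : Type} (nb : V -> list V) (mu : V -> V -> R) (m : R)
    (u : V -> R) (x : V) : R :=
  / vmeas nb mu x *
  sum_nb nb x (fun y => mu x y * powp (m - 2) (Rabs (u y - u x)) * (u y - u x)).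

Definition grad_norm {V : Type} (nb : V -> list V) (mu : V -> V -> R)
    (u : V -> R) (x : V) : R :=
  sqrt (sum_nb nb x (fun y => mu x y / (2 * vmeas nb mu x) * (u y - u x) ^ 2)).

(* |nabla u(x)|^q with the conventions 0^0 = 1, 0^q = 0 (q>0), and for
   q < 0 the value +oo at |nabla u| = 0 (so the inequality fails there). *)
Definition ineq_at {V : Type} (nb : V -> list V) (mu : V -> V -> R)
    (m p q : R) (u : V -> R) (x : V) : Prop :=
  let g := grad_norm nb mu u x in
  let D := Delta_m nb mu m u x in
  let up := Rpower (u x) p in
  if Rlt_dec q 0 then 0 < g /\ D + up * Rpower g q <= 0
  else if Req_EM_T q 0 then D + up <= 0
  else D + up * powp q g <= 0.

Definition nontrivial_pos_solution {V : Type} (nb : V -> list V)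
    (mu : V -> V -> R) (m p q : R) (u : V -> R) : Prop :=
  (forall x, 0 < u x) /\ (exists x y, u x <> u y) /\
  (forall x, ineq_at nb mu m p q u x).

(* Main.v *)
Require Import Defs.
From Stdlib Require Import Reals List Relations Lra Psatz.
Open Scope R_scope.

Section L.
Context {V : Type}.

Lemma s_mono (l : list V) (f g : V -> R) :
  (forall y, In y l -> f y <= g y) ->
  fold_right (fun y acc => f y + acc) 0 l <= fold_right (fun y acc => g y + acc) 0 l.
Proof.
  induction l as [|z l IH]; simpl; intros H; [lra|].
  assert (f z <= g z) by (apply H; auto).
  assert (fold_right (fun y acc => f y + acc) 0 l <= fold_right (fun y acc => g y + acc) 0 l)
    by (apply IH; intros; apply H; auto). lra.
Qed.

Lemma s_ext (l : list V) (f g : V -> R) :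
  (forall y, In y l -> f y = g y) ->
  fold_right (fun y acc => f y + acc) 0 l = fold_right (fun y acc => g y + acc) 0 l.
Proof.
  intros H; apply Rle_antisym; apply s_mono; intros y Hy; rewrite H; auto; lra.
Qed.

Lemma s_lin (l : list V) (f g : V -> R) (b c : R) :
  fold_right (fun y acc => (b * f y - c * g y) + acc) 0 l =
  b * fold_right (fun y acc => f y + acc) 0 l - c * fold_right (fun y acc => g y + acc) 0 l.
Proof. induction l; simpl; [ring|rewrite IHl; ring]. Qed.

Lemma s_scal (l : list V) (f : V -> R) (c : R) :
  fold_right (fun y acc => c * f y + acc) 0 l = c * fold_right (fun y acc => f y + acc) 0 l.
Proof. induction l; simpl; [ring|rewrite IHl; ring]. Qed.
End L.

Lemma Rpower_pos' x y : 0 < Rpower x y.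
Proof. unfold Rpower; apply exp_pos. Qed.

Lemma lemA a d m : 0 < a -> -a < d -> 3 <= m ->
  - Rpower a (m-1) <= powp (m-2) (Rabs d) * d.
Proof.
  intros Ha Hd Hm. unfold powp.
  assert (HP := Rpower_pos' a (m-1)).
  destruct (Rle_dec (Rabs d) 0). lra.
  destruct (Rle_lt_dec 0 d).
  - assert (HQ := Rpower_pos' (Rabs d) (m-2)). nra.
  - rewrite Rabs_left by lra.
    assert (Rpower (-d) (m-2) <= Rpower a (m-2)) by (apply Rle_Rpower_l; lra).
    replace (m-1) with ((m-2)+1) by ring. rewrite Rpower_plus, Rpower_1 by lra.
    assert (HQ := Rpower_pos' (-d) (m-2)).
    assert (HR := Rpower_pos' a (m-2)). nra.
Qed.

Lemma lemB a d m : 0 < a -> -a < d -> 3 <= m ->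
  Rpower a (m-3) * (d^2 - 2*a^2) <= powp (m-2) (Rabs d) * d.
Proof.
  intros Ha Hd Hm.
  assert (HA := lemA a d m Ha Hd Hm).
  assert (H3 := Rpower_pos' a (m-3)).
  assert (E : Rpower a (m-1) = Rpower a (m-3) * a^2).
  { replace (m-1) with ((m-3)+INR 2) by (simpl; ring).
    rewrite Rpower_plus, Rpower_pow by lra. reflexivity. }
  destruct (Rle_lt_dec 0 d).
  - unfold powp. destruct (Rle_dec (Rabs d) 0).
    + assert (d = 0) by (pose proof (Rabs_pos d); destruct (Req_dec d 0); auto; pose proof (Rabs_no_R0 d); lra). subst. nra.
    + rewrite Rabs_right by lra.
      destruct (Rle_lt_dec a d).
      * replace (m-2) with ((m-3)+1) by ring. rewrite Rpower_plus, Rpower_1 by lra.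
        assert (Rpower a (m-3) <= Rpower d (m-3)) by (apply Rle_Rpower_l; lra).
        assert (0 <= (Rpower d (m-3) - Rpower a (m-3)) * (d*d)) by (apply Rmult_le_pos; nra). assert (0 <= Rpower a (m-3) * (a*a)) by (apply Rmult_le_pos; nra). nra.
      * assert (HQ := Rpower_pos' d (m-2)). assert (0 <= Rpower d (m-2) * d) by (apply Rmult_le_pos; lra). assert (Rpower a (m-3) * (d^2 - 2*a^2) <= 0) by (assert (0 <= Rpower a (m-3) * (2*a^2 - d^2)) by (apply Rmult_le_pos; nra); lra). lra.
  - rewrite E in HA. assert (0 <= Rpower a (m-3) * (a^2 - d^2)) by (apply Rmult_le_pos; nra). lra.
Qed.

Theorem mainTheorem6 (V : Type) (adj : V -> V -> Prop) (nb : V -> list V)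
    (mu : V -> V -> R) (m p q : R) :
  weighted_graph V adj nb mu ->
  infinite_type V ->
  connected V adj ->
  cond_p0 adj nb mu ->
  3 <= m ->
  p + q = m - 1 ->
  q < 0 ->
  ~ exists u : V -> R, nontrivial_pos_solution nb mu m p q u.
Proof.
  intros WG _ _ _ Hm Hpq Hq [u [Hpos [[x [_ _]] Hsol]]].
  destruct WG as [_ [_ [_ [_ [_ [Hmu0 _]]]]]].
  specialize (Hsol x). unfold ineq_at in Hsol.
  destruct (Rlt_dec q 0) as [_|]; [|lra].
  destruct Hsol as [Hg Hineq].
  set (a := u x) in *. assert (Ha : 0 < a) by apply Hpos.
  set (g := grad_norm nb mu u x) in *.
  set (M := vmeas nb mu x) in *.
  set (S2 := sum_nb nb x (fun y => mu x y * (u y - u x)^2)).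
  assert (HM0 : 0 <= M).
  { unfold M, vmeas, sum_nb.
    replace 0 with (fold_right (fun y acc => (fun _ : V => 0) y + acc) 0 (nb x)) at 1.
    apply s_mono; intros; apply Hmu0.
    clear; induction (nb x); simpl; [ring|rewrite IHl; ring]. }
  assert (HT : g = sqrt (/ (2*M) * S2)).
  { unfold g, grad_norm, S2, sum_nb. f_equal. rewrite <- s_scal.
    apply s_ext; intros; unfold M; unfold Rdiv; ring. }
  destruct (Req_dec M 0) as [HM|HM].
  { rewrite HT, HM in Hg. rewrite Rmult_0_r, Rinv_0, Rmult_0_l, sqrt_0 in Hg. lra. }
  assert (HMp : 0 < M) by lra.
  set (F := fun y => mu x y * powp (m - 2) (Rabs (u y - u x)) * (u y - u x)).
  assert (HD : Delta_m nb mu m u x = / M * sum_nb nb x F) by reflexivity.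
  assert (Hd : forall y, - a < u y - u x) by (intro y; pose proof (Hpos y); unfold a; lra).
  assert (HgP := Rpower_pos' g q).
  assert (HaP := Rpower_pos' a p).
  destruct (Rlt_le_dec g a) as [Hga|Hga].
  -
    assert (HsF : - Rpower a (m-1) * M <= sum_nb nb x F).
    { unfold M, vmeas, sum_nb. rewrite <- s_scal. apply s_mono; intros y _.
      unfold F. pose proof (lemA a (u y - u x) m Ha (Hd y) Hm). pose proof (Hmu0 x y).
      nra. }
    assert (HDl : - Rpower a (m-1) <= Delta_m nb mu m u x).
    { rewrite HD. apply Rmult_le_reg_l with M; auto.
      rewrite <- Rmult_assoc, Rinv_r by lra. lra. }
    assert (Hgq : Rpower a q < Rpower g q).
    { replace q with (- - q) by ring. rewrite (Rpower_Ropp a (-q)), (Rpower_Ropp g (-q)).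
      apply Rinv_lt_contravar.
      - apply Rmult_lt_0_compat; apply Rpower_pos'.
      - apply Rlt_Rpower_l; lra. }
    assert (Rpower a p * Rpower a q = Rpower a (m-1)) by (rewrite <- Rpower_plus; f_equal; lra).
    nra.
  -
    assert (HsF : Rpower a (m-3) * S2 - (Rpower a (m-3) * 2 * a^2) * M <= sum_nb nb x F).
    { unfold M, S2, vmeas, sum_nb. rewrite <- s_lin. apply s_mono; intros y _.
      unfold F. pose proof (lemB a (u y - u x) m Ha (Hd y) Hm). pose proof (Hmu0 x y).
      nra. }
    assert (HS2 : 2 * M * a^2 <= S2).
    { assert (HT0 : 0 < / (2*M) * S2).
      { destruct (Rle_lt_dec (/ (2*M) * S2) 0); auto. rewrite HT, sqrt_neg_0 in Hg; lra. }
      assert (g^2 = / (2*M) * S2) by (rewrite HT; apply pow2_sqrt; lra).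
      assert (a^2 <= g^2) by nra.
      assert (S2 = (2*M) * (/ (2*M) * S2)) by (field; lra). nra. }
    assert (H3 := Rpower_pos' a (m-3)).
    assert (HDl : 0 <= Delta_m nb mu m u x).
    { rewrite HD. apply Rmult_le_pos. left; apply Rinv_0_lt_compat; lra. nra. }
    nra.
Qed.
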